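(* Let $G$ be a finite group with conjugacy classes $\mathcal{C}_1,\dots,\mathcal{C}_s$, and let $r\ge 2$ be a prime with $r\nmid |G|$. Let $g\in G\wr S_n$ have type $T(g)=(T(g)_{ij})_{s\times n}$. Then $g$ is an $r$-th power in $G\wr S_n$ if and only if $r\mid T(g)_{ij}$ whenever $r\mid j$.
   Context: $G\wr S_n$ is the set of pairs $(f,\pi)$ with $f:\{1,\dots,n\}\to G$ and $\pi\in S_n$, with product $(f,\pi)(f',\pi')=(ff'_\pi,\pi\pi')$, $f'_\pi(i)=f'(\pi^{-1}(i))$, pointwise product of functions. For $(f,\pi)$ and a cycle $(j,\pi(j),\dots,\pi^t(j))$ of $\pi$, its cycle product is $f(j)f(\pi^{-1}(j))\cdots f(\pi^{-t}(j))$; its conjugacy class is independent of the starting point. The type $T(g)$ of $g=(f,\pi)$ is the $s\times n$ matrix whose $(i,k)$ entry is the number of $k$-cycles of $\pi$ whose cycle product lies in $\mathcal{C}_i$. An element $g$ is an $r$-th power if $g=h^r$ for some $h\in G\wr S_n$. *)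

(* Defs.v *)
From mathcomp Require Import all_boot all_fingroup.
Set Implicit Arguments. Unset Strict Implicit. Unset Printing Implicit Defensive.
Local Open Scope group_scope.

Definition wr (gT : finGroupType) (n : nat) : Type :=
  ({ffun 'I_n -> gT} * {perm 'I_n})%type.

(* Paper's product pi pi' is the composition pi o pi' (apply pi' first);
   in MathComp, (pi' * pi)%g x = pi (pi' x). *)
Definition wr_mul (gT : finGroupType) (n : nat) (g h : wr gT n) : wr gT n :=
  let: (f, pi) := g in let: (f', pi') := h in
  ([ffun i => f i * f' ((pi^-1)%g i)], (pi' * pi)%g).

Definition wr_one (gT : finGroupType) (n : nat) : wr gT n := ([ffun=> 1], 1%g).

Fixpoint wr_pow (gT : finGroupType) (n : nat) (h : wr gT n) (r : nat) : wr gT n :=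
  if r is r'.+1 then wr_mul h (wr_pow h r') else wr_one gT n.

Definition is_rth_power (gT : finGroupType) (n : nat) (g : wr gT n) (r : nat) : Prop :=
  exists h : wr gT n, wr_pow h r = g.

Definition cycle_prod (gT : finGroupType) (n : nat) (f : {ffun 'I_n -> gT})
  (pi : {perm 'I_n}) (j : 'I_n) : gT :=
  \prod_(k < #|porbit pi j|) f (((pi^-1) ^+ k)%g j).

Definition orbit_prod (gT : finGroupType) (n : nat) (f : {ffun 'I_n -> gT})
  (pi : {perm 'I_n}) (O : {set 'I_n}) : gT :=
  if [pick x in O] is Some j then cycle_prod f pi j else 1.

Definition wr_type (gT : finGroupType) (n : nat) (g : wr gT n)
  (C : {set gT}) (k : nat) : nat :=
  #|[set O in porbits g.2 | (#|O| == k) && (orbit_prod g.1 g.2 O \in C)]|.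

(* Main.v *)
Require Import Defs.
From mathcomp Require Import all_boot all_fingroup.
From mathcomp Require Import all_solvable zify.
Set Implicit Arguments. Unset Strict Implicit. Unset Printing Implicit Defensive.

Module Aux.
Local Open Scope group_scope.

Section Basics.
Variable gT : finGroupType.

Lemma tele (a b : nat -> gT) m :
  \prod_(k < m) ((a k)^-1 * b k * a k.+1) = (a 0%N)^-1 * (\prod_(k < m) b k) * a m.
Proof.
elim: m => [|m IH]; first by rewrite !big_ord0 mulg1 mulVg.
by rewrite !big_ord_recr /= IH !mulgA mulgK.
Qed.

Lemma big_blocks (g : nat -> gT) r L :
  \prod_(a < L) \prod_(k < r) g (a * r + k)%N = \prod_(m < L * r) g m.
Proof.
elim: L => [|L IH]; first by rewrite !big_ord0.
rewrite big_ord_recr /= IH mulSnr big_split_ord /=.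
by congr (_ * _); apply: eq_bigr.
Qed.

Lemma big_nat_recl' (g : nat -> gT) K :
  \prod_(i < K.+1) g i = g 0%N * \prod_(i < K) g i.+1.
Proof. by rewrite big_ord_recl. Qed.

Lemma prod_const (c : gT) N : \prod_(a < N) c = c ^+ N.
Proof. by elim: N => [|N IH]; rewrite ?big_ord0 // big_ord_recr IH expgSr. Qed.

Lemma prod_one_hot (c : gT) K m0 (P : nat -> bool) :
  m0 < K -> (forall m, m < K -> P m = (m == m0)) ->
  \prod_(m < K) (if P m then c else 1) = c.
Proof.
move=> lt HP.
suff H: forall K', K' <= K -> \prod_(m < K') (if P m then c else 1) = if m0 < K' then c else 1.
  by rewrite H // lt.
elim=> [|K' IH] le; first by rewrite big_ord0.
rewrite big_ord_recr /= IH ?(ltnW le) // HP //.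
case: (ltngtP m0 K') => [h|h|->]; rewrite ?eqxx ?mulg1 ?mul1g ?ltnSn //.
  by rewrite ltnS ltnW.
by rewrite ltnS leqNgt h.
Qed.

End Basics.

Section Perm.
Variable T : finType.
Implicit Types (s : {perm T}) (x y : T).

Lemma iter_mulL s x q : iter (q * #|porbit s x|) s x = x.
Proof. by elim: q => // q IH; rewrite mulSn iterD IH iter_porbit. Qed.

Lemma iter_mod s x a : iter (a %% #|porbit s x|) s x = iter a s x.
Proof. by rewrite {2}(divn_eq a #|porbit s x|) addnC iterD iter_mulL. Qed.

Lemma porbit_gt0 s x : 0 < #|porbit s x|.
Proof. by rewrite lt0n card_porbit_neq0. Qed.

Lemma iter_inj_lt s x a b : a < #|porbit s x| -> b < #|porbit s x| ->
  iter a s x = iter b s x -> a = b.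
Proof.
move=> Ha Hb; rewrite -(nth_traject s Ha x) -(nth_traject s Hb x) => E.
apply/eqP; rewrite -(nth_uniq x _ _ (uniq_traject_porbit s x)) ?size_traject //.
by rewrite E.
Qed.

Lemma iter_fixE s x a : (iter a s x == x) = (#|porbit s x| %| a).
Proof.
rewrite -iter_mod /dvdn; move: (ltn_pmod a (porbit_gt0 s x)); case: (a %% #|porbit s x|) => [|m] h1; first by rewrite /= !eqxx.
apply/negbTE/eqP => E2.
by have := @iter_inj_lt s x m.+1 0 h1 (porbit_gt0 s x) E2.
Qed.

Lemma index_iter s x a : a < #|porbit s x| ->
  index (iter a s x) (traject s x #|porbit s x|) = a.
Proof.
move=> Ha; rewrite -(nth_traject s Ha x) index_uniq ?size_traject //.
exact: uniq_traject_porbit.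
Qed.

Lemma porbit_iter s x a : porbit s (iter a s x) = porbit s x.
Proof. by rewrite -permX porbit_perm. Qed.

Lemma porbit_inv s x : porbit s (s^-1 x) = porbit s x.
Proof. by rewrite -porbitV -(expg1 s^-1) porbit_perm porbitV. Qed.

Lemma porbit_memE s x y : y \in porbit s x -> porbit s y = porbit s x.
Proof. by move=> H; apply/eqP; rewrite eq_porbit_mem. Qed.

Lemma commute_perm s t x m : commute s t -> (t ^+ m) (s x) = s ((t ^+ m) x).
Proof. by move=> c; rewrite -!permM (commuteX m c). Qed.

Lemma porbit_commute s t x : commute t s ->
  [set t y | y in porbit s x] = porbit s (t x).
Proof.
move=> c; apply/setP => y; apply/imsetP/porbitP.
  by case=> z /porbitP [i ->] ->; exists i; rewrite commute_perm.
by case=> i ->; exists ((s ^+ i) x); [exact: mem_porbit | rewrite commute_perm].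
Qed.

Lemma card_porbit_commute s t x : commute t s ->
  #|porbit s (t x)| = #|porbit s x|.
Proof. by move=> c; rewrite -porbit_commute // card_imset //; apply: perm_inj. Qed.

Lemma permV_iter s x a : (s^-1 ^+ a) ((s ^+ a) x) = x.
Proof. by rewrite expVgn permK. Qed.
Lemma perm_iterV s x a : (s ^+ a) ((s^-1 ^+ a) x) = x.
Proof. by rewrite expVgn permKV. Qed.

End Perm.


Section Wr.
Variables (gT : finGroupType) (n : nat).
Implicit Types (f F : {ffun 'I_n -> gT}) (s p : {perm 'I_n}).

Lemma wr_pow_formula f s m :
  wr_pow (f, s) m = ([ffun i => \prod_(k < m) f ((s^-1 ^+ k) i)], s ^+ m).
Proof.
elim: m => [|m IH] /=.
  by rewrite /wr_one; congr (_, _); apply/ffunP => i; rewrite !ffunE big_ord0.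
rewrite IH /= expgSr; congr (_, _); apply/ffunP => i; rewrite !ffunE big_ord_recl /=.
rewrite expg0 perm1; congr (_ * _); apply: eq_bigr => k _.
by rewrite /bump /= add1n expgS permM.
Qed.

Lemma rth_powerP F p r : is_rth_power (F, p) r <->
  exists f s, s ^+ r = p /\ forall i, F i = \prod_(k < r) f ((s^-1 ^+ k) i).
Proof.
split.
  case=> [[f s]]; rewrite wr_pow_formula => -[<- <-]; exists f, s; split=> // i.
  by rewrite ffunE.
case=> f [s [<- H]]; exists (f, s); rewrite wr_pow_formula; congr (_, _).
by apply/ffunP => i; rewrite ffunE H.
Qed.

Lemma cp_inv F p x :
  cycle_prod F p (p^-1 x) = (cycle_prod F p x) ^ (F x).
Proof.
rewrite /cycle_prod porbit_inv.
case E: #|porbit p x| (porbit_gt0 p x) => [//|L] _.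
rewrite big_ord_recr big_ord_recl /= conjgE expg0 perm1 mulgA mulKg.
congr (_ * _).
  by apply: eq_bigr => k _; rewrite /bump /= add1n expgS permM.
have := iter_porbit p^-1 x; rewrite porbitV E -permX expgSr permM => h.
by rewrite -permM -expgS expgSr permM h.
Qed.

Definition conjc (a b : gT) := a \in b ^: [set: gT].

Lemma conjc_refl a : conjc a a.
Proof. exact: class_refl. Qed.
Lemma conjc_sym a b : conjc a b -> conjc b a.
Proof. by rewrite /conjc class_sym. Qed.
Lemma conjc_trans a b c : conjc a b -> conjc b c -> conjc a c.
Proof. exact: class_trans. Qed.
Lemma conjc_J a u : conjc (a ^ u) a.
Proof. by apply: memJ_class; rewrite inE. Qed.

Lemma cp_orbit F p x y : y \in porbit p x ->
  conjc (cycle_prod F p y) (cycle_prod F p x).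
Proof.
rewrite -porbitV => /porbitP [i ->]; elim: i => [|i IH].
  by rewrite expg0 perm1; apply: conjc_refl.
by rewrite expgSr permM cp_inv; apply: conjc_trans (conjc_J _ _) IH.
Qed.

Lemma op_class F p x :
  conjc (orbit_prod F p (porbit p x)) (cycle_prod F p x).
Proof.
rewrite /orbit_prod; case: pickP => [z Hz|H]; first exact: cp_orbit.
by have := H x; rewrite porbit_id.
Qed.

End Wr.


Section Fwd.
Variables (gT : finGroupType) (n r : nat) (F f : {ffun 'I_n -> gT}) (p s : {perm 'I_n}).
Hypothesis pr : prime r.
Hypothesis Hs : s ^+ r = p.
Hypothesis HF : forall i, F i = \prod_(k < r) f ((s^-1 ^+ k) i).

Lemma comm_id i : f i * F (s^-1 i) = F i * f (p^-1 i).
Proof.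
rewrite !HF; transitivity (\prod_(k < r.+1) f ((s^-1 ^+ k) i)).
  rewrite big_ord_recl expg0 perm1; congr (_ * _); apply: eq_bigr => k _.
  by rewrite /bump /= ?add1n expgS permM.
by rewrite big_ord_recr /= -Hs -expVgn.
Qed.

Lemma comm_sp : commute s p.
Proof. by rewrite -Hs; apply: commuteX; apply: commute_refl. Qed.

Lemma cp_sigma j : cycle_prod F p j = (cycle_prod F p (s j)) ^ (f (s j)).
Proof.
have Ls := card_porbit_commute j comm_sp.
have cV : commute s p^-1 by apply: commuteV; exact: comm_sp.
rewrite /cycle_prod Ls.
pose a m := f ((p^-1 ^+ m) (s j)).
transitivity (\prod_(m < #|porbit p j|) ((a m)^-1 * F ((p^-1 ^+ m) (s j)) * a m.+1)).
  apply: eq_bigr => m _; rewrite /a.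
  have E := comm_id ((p^-1 ^+ m) (s j)).
  rewrite commute_perm // permK in E.
  by rewrite expgSr permM !commute_perm // -mulgA -E mulKg.
have := iter_porbit p^-1 (s j); rewrite porbitV Ls -permX => h.
by rewrite (tele a (fun m => F ((p^-1 ^+ m) (s j)))) conjgE !mulgA /a expg0 perm1 h.
Qed.

Variable C : {set gT}.
Hypothesis HC : C \in classes [set: gT].
Variable k : nat.
Hypothesis rk : r %| k.

Definition X := [set O in porbits p | (#|O| == k) && (orbit_prod F p O \in C)].

Lemma conjc_C a b : conjc a b -> (a \in C) = (b \in C).
Proof. by case/imsetP: HC => x0 _ ->; apply: class_transl. Qed.

Lemma inX_orbit A : A \in X -> exists j, A = porbit p j.
Proof. by rewrite inE => /andP [/imsetP [j _ ->] _]; exists j. Qed.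

Lemma stepX j : porbit p j \in X -> porbit p (s j) \in X.
Proof.
rewrite !inE (card_porbit_commute j comm_sp) => /andP [_ /andP [-> H]].
rewrite imset_f ?inE //=.
suff: conjc (orbit_prod F p (porbit p (s j))) (orbit_prod F p (porbit p j)) by move/conjc_C ->.
apply: conjc_trans (op_class _ _ _) _.
apply: conjc_trans (conjc_sym (op_class F p j)).
by rewrite (cp_sigma j); apply: conjc_sym; apply: conjc_J.
Qed.

Lemma fixfree j : porbit p j \in X -> [set s y | y in porbit p j] = porbit p j -> False.
Proof.
rewrite inE => /andP [_ /andP [/eqP Hk _]] E.
have Hsub m : (s ^+ m) j \in porbit p j.
  elim: m => [|m IH]; first by rewrite expg0 perm1 porbit_id.
  by rewrite expgSr permM -E imset_f.
have EO : porbit p j = porbit s j.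
  apply/eqP; rewrite eqEsubset; apply/andP; split; apply/subsetP => y.
    by case/porbitP => i ->; rewrite -Hs -expgM mem_porbit.
  by case/porbitP => i ->.
have k0 : 0 < k by rewrite -Hk porbit_gt0.
have r1 : 1 < r by apply: prime_gt1.
have : iter (k %/ r) p j == j.
  rewrite -permX -Hs -expgM mulnC divnK // permX.
  by apply/eqP; rewrite -Hk EO iter_porbit.
rewrite iter_fixE Hk => /dvdn_leq; rewrite divn_gt0 ?prime_gt0 // (dvdn_leq k0 rk).
by move=> /(_ isT); rewrite leqNgt ltn_Pdiv.
Qed.

Definition rhof (A : {set 'I_n}) := if A \in X then [set s y | y in A] else A.

Lemma rho_X A : A \in X -> rhof A \in X.
Proof. by rewrite /rhof => H; rewrite H; case: (inX_orbit H) => j E; rewrite E porbit_commute ?stepX -?E //; apply: comm_sp. Qed.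

Lemma rho_inj : injective rhof.
Proof.
move=> A B; case AX: (A \in X); case BX: (B \in X).
- by rewrite /rhof AX BX; apply: imset_inj; apply: perm_inj.
- by move=> E; have := rho_X AX; rewrite E /rhof !BX.
- by move=> E; have := rho_X BX; rewrite -E /rhof !AX.
- by rewrite /rhof AX BX.
Qed.

Definition rho := perm rho_inj.

Lemma rho_iter j m : porbit p j \in X ->
  porbit p ((s ^+ m) j) \in X /\ iter m rhof (porbit p j) = porbit p ((s ^+ m) j).
Proof.
move=> H; elim: m => [|m [IH1 IH2]]; first by rewrite expg0 perm1.
rewrite expgSr permM; split; first exact: stepX.
by rewrite iterS IH2 /rhof IH1 porbit_commute //; apply: comm_sp.
Qed.

Lemma rho_r : rho ^+ r = 1.
Proof.
apply/permP => A; rewrite perm1 permX (eq_iter (permE rho_inj)).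
case AX: (A \in X).
  case: (inX_orbit AX) => j E; rewrite E in AX *.
  by have [_ ->] := rho_iter r AX; rewrite Hs -(expg1 p) porbit_perm.
elim: r => [//|m IH]; by rewrite iterS IH /rhof AX.
Qed.

Lemma X_card : r %| #|X|.
Proof.
have pg : r.-group <[rho]>.
  rewrite /pgroup -orderE; apply: pnat_dvd (pnat_id pr).
  by rewrite order_dvdn rho_r.
have ac : [acts <[rho]>, on X | 'P].
  rewrite /acts_on cycle_subG; apply/astabsP => A /=; rewrite /aperm permE.
  case AX: (A \in X); first exact: rho_X.
  by rewrite /rhof AX.
have := pgroup_fix_mod pg ac.
have -> : 'Fix_(X | 'P)(<[rho]>) = set0.
  apply/setP => A; rewrite inE in_set0; apply/andP => -[AX /afixP H].
  have := H rho (cycle_id rho); rewrite /= /aperm permE /rhof AX.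
  by case: (inX_orbit AX) => j E; rewrite E in AX *; apply: fixfree.
by rewrite cards0 mod0n => /eqP; rewrite -/(dvdn _ _).
Qed.

End Fwd.


Section Cohom.
Variables (gT : finGroupType) (n : nat) (F P : {ffun 'I_n -> gT}) (p : {perm 'I_n}).
Hypothesis H : forall x, exists u, cycle_prod F p x = (cycle_prod P p x) ^ u.

Definition rep y := odflt y [pick z in porbit p y].

Lemma rep_in y : rep y \in porbit p y.
Proof.
by rewrite /rep; case: pickP => [z //|H0]; have := H0 y; rewrite porbit_id.
Qed.

Lemma rep_eq y y' : porbit p y = porbit p y' -> rep y = rep y'.
Proof.
move=> E; rewrite /rep E; case: pickP => [//|H0].
by have := H0 y'; rewrite porbit_id.
Qed.

Lemma porbit_rep y : porbit p (rep y) = porbit p y.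
Proof. exact: porbit_memE (rep_in y). Qed.

Definition aa y := index y (traject p (rep y) #|porbit p y|).

Lemma aa_lt y : aa y < #|porbit p y|.
Proof.
rewrite /aa -[X in _ < X](size_traject p (rep y)) index_mem.
by rewrite -{1}(porbit_rep y) -porbit_traject porbit_rep porbit_id.
Qed.

Lemma aa_iter y : iter (aa y) p (rep y) = y.
Proof.
rewrite -(nth_traject p (aa_lt y)) /aa nth_index //.
by rewrite -(porbit_rep y) -porbit_traject porbit_rep porbit_id.
Qed.

Lemma aa_idx x a : a < #|porbit p x| -> aa (iter a p (rep x)) = a.
Proof.
move=> Ha; rewrite /aa porbit_iter porbit_rep (rep_eq (y' := x)) ?porbit_iter ?porbit_rep //.
by rewrite -(porbit_rep x) index_iter // porbit_rep.
Qed.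

Lemma rep_inv y : rep (p^-1 y) = rep y.
Proof. by apply: rep_eq; rewrite porbit_inv. Qed.

Lemma aa_pred y : aa y = (aa (p^-1 y)).+1 \/ (aa y = 0%N /\ aa (p^-1 y) = (#|porbit p y|).-1).
Proof.
have L0 := porbit_gt0 p y.
case E: (aa y) => [|a]; [right; split => //|left].
  have Ey : rep y = y by rewrite -{2}(aa_iter y) E.
  have : p^-1 y = iter (#|porbit p y|).-1 p (rep y).
    apply: (@perm_inj _ p); rewrite permKV -iterS prednK // -(porbit_rep y) iter_porbit.
    by rewrite Ey.
  move=> ->; rewrite aa_idx //. by rewrite prednK.
have : p^-1 y = iter a p (rep y).
  by apply: (@perm_inj _ p); rewrite permKV -iterS -E aa_iter.
move=> ->; rewrite aa_idx //; apply: ltn_trans (aa_lt y); by rewrite E.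
Qed.

Definition t0 x := odflt 1 [pick u | cycle_prod F p x == (cycle_prod P p x) ^ u].

Lemma t0_spec x : cycle_prod F p x = (cycle_prod P p x) ^ (t0 x).
Proof.
rewrite /t0; case: pickP => [u /eqP //|H0].
by case: (H x) => u E; have := H0 u; rewrite E eqxx.
Qed.

Definition AF y := \prod_(m < aa y) F ((p^-1 ^+ m) y).
Definition AP y := \prod_(m < aa y) P ((p^-1 ^+ m) y).
Definition ttc y := AF y * (t0 (rep y))^-1 * (AP y)^-1.

Lemma prod_shift (G : {ffun 'I_n -> gT}) y a :
  \prod_(m < a.+1) G ((p^-1 ^+ m) y) = G y * \prod_(m < a) G ((p^-1 ^+ m) (p^-1 y)).
Proof.
rewrite big_ord_recl expg0 perm1; congr (_ * _); apply: eq_bigr => m _.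
by rewrite /bump /= ?add1n expgS permM.
Qed.

Lemma tt_spec y : F y = ttc y * P y * (ttc (p^-1 y))^-1.
Proof.
suff E : ttc y * P y = F y * ttc (p^-1 y) by rewrite E mulgK.
rewrite /ttc rep_inv /AF /AP.
case: (aa_pred y) => [-> | [E1 E2]].
  rewrite !prod_shift invMg !mulgA mulgKV; by [].
rewrite E1 E2 !big_ord0 !mul1g invg1 mulg1.
have Ey : rep y = y by rewrite -{2}(aa_iter y) E1.
have L0 := porbit_gt0 p y.
have cF := t0_spec y; have Ex := prod_shift F y (#|porbit p y|).-1.
have Px := prod_shift P y (#|porbit p y|).-1.
rewrite prednK // -/(cycle_prod F p y) in Ex.
rewrite prednK // -/(cycle_prod P p y) in Px.
rewrite Ey.
set AFz := \prod_(m < _) F _ in Ex *; set APz := \prod_(m < _) P _ in Px *.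
have -> : APz = (P y)^-1 * cycle_prod P p y by rewrite Px mulKg.
by rewrite invMg invgK !mulgA -Ex cF conjgE !mulgA !mulgK.
Qed.

Lemma cohom : exists t : 'I_n -> gT, forall y, F y = t y * P y * (t (p^-1 y))^-1.
Proof. by exists ttc; exact: tt_spec. Qed.

End Cohom.


Lemma arith_mod N r k : 0 < r -> 0 < k ->
  N %% (r * k) = (r * ((N %/ r) %% k) + N %% r)%N.
Proof.
move=> r0 k0.
have lt : (r * ((N %/ r) %% k) + N %% r < r * k)%N.
  have h1 := ltn_pmod (N %/ r) k0; have h2 := ltn_pmod N r0.
  have : (r * ((N %/ r) %% k) + N %% r < r * ((N %/ r) %% k).+1)%N.
    by rewrite mulnS addnC ltn_add2r.
  move=> h; apply: leq_trans h _; by rewrite leq_mul2l h1 orbT.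
rewrite {1}(divn_eq N r) {1}(divn_eq (N %/ r) k).
rewrite mulnDl -mulnA (mulnC k) -addnA modnMDl.
by rewrite (mulnC _ r) modn_small.
Qed.

Lemma arith2 P K m : P < K -> m < K -> ((P + K - m) %% K == 0) = (m == P).
Proof.
move=> hP hm; case: (leqP m P) => h.
  have -> : (P + K - m = (P - m) + K)%N by lia.
  rewrite modnDr modn_small; last by lia.
  apply/eqP/eqP; lia.
rewrite modn_small; last by lia.
apply/eqP/eqP; lia.
Qed.

Section Bwd.
Variables (gT : finGroupType) (n r : nat) (F : {ffun 'I_n -> gT}) (p : {perm 'I_n}) (d : 'I_n).
Hypothesis pr : prime r.
Hypothesis nG : ~~ (r %| #|[set: gT]|).
Hypothesis Hcond : forall C : {set gT}, C \in classes [set: gT] ->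
      forall k : nat, 0 < k <= n -> r %| k -> r %| wr_type (F, p) C k.

Definition Lp y := #|porbit p y|.
Definition Cl y := (orbit_prod F p (porbit p y)) ^: [set: gT].
Definition Xs y := [set O in porbits p | (#|O| == Lp y) && (orbit_prod F p O \in Cl y)].
Definition es y := enum (Xs y).
Definition ii y := index (porbit p y) (es y).
Definition bs y := (ii y %/ r * r)%N.
Definition xr (O : {set 'I_n}) := odflt d [pick z in O].
Definition psi (e : seq {set 'I_n}) (b N : nat) : 'I_n :=
  (p ^+ (N %/ r)) (xr (nth set0 e (b + N %% r))).
Definition ps y := psi (es y) (bs y).
Definition bpos y := (r * index y (traject p (xr (porbit p y)) (Lp y)) + ii y %% r)%N.

Lemma r0 : 0 < r. Proof. exact: prime_gt0. Qed.

Lemma porbit_xr O : O \in porbits p -> porbit p (xr O) = O.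
Proof.
case/imsetP => z _ ->; apply: porbit_memE; rewrite /xr; case: pickP => [//|H].
by have := H z; rewrite porbit_id.
Qed.

Section Block.
Variable y : 'I_n.
Hypothesis Hy : r %| Lp y.

Lemma y_in : porbit p y \in Xs y.
Proof. by rewrite inE imset_f ?inE //= eqxx /Cl class_refl. Qed.

Lemma size_es : r %| size (es y).
Proof.
rewrite /es -cardE.
have := Hcond (C := Cl y) _ (k := Lp y); apply => //.
  by rewrite /Cl mem_classes ?inE.
by rewrite porbit_gt0 /= /Lp (leq_trans (max_card _)) // card_ord.
Qed.

Lemma ii_lt : ii y < size (es y).
Proof. by rewrite /ii index_mem mem_enum y_in. Qed.

Lemma bs_r : (bs y + r <= size (es y))%N.
Proof.
have S := divnK size_es; rewrite /bs -mulSnr -S leq_mul2r.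
by rewrite ltn_divLR ?r0 // S ii_lt orbT.
Qed.

Lemma nth_in N : nth set0 (es y) (bs y + N %% r) \in Xs y.
Proof.
rewrite -mem_enum; apply: mem_nth; apply: leq_trans bs_r.
by rewrite ltn_add2l ltn_mod r0.
Qed.

Lemma Xs_orbit O : O \in Xs y -> [/\ O \in porbits p, #|O| = Lp y & orbit_prod F p O \in Cl y].
Proof. by rewrite inE => /andP [-> /andP [/eqP -> ->]]. Qed.

Lemma porbit_ps N : porbit p (ps y N) = nth set0 (es y) (bs y + N %% r).
Proof.
have [H1 _ _] := Xs_orbit (nth_in N).
by rewrite /ps /psi porbit_perm porbit_xr.
Qed.

Lemma Lp_ps N : Lp (ps y N) = Lp y.
Proof. by rewrite /Lp porbit_ps; have [] := Xs_orbit (nth_in N). Qed.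

Lemma Cl_ps N : Cl (ps y N) = Cl y.
Proof. by rewrite /Cl porbit_ps; have [_ _ /class_eqP] := Xs_orbit (nth_in N). Qed.

Lemma Xs_ps N : Xs (ps y N) = Xs y.
Proof. by rewrite /Xs Lp_ps Cl_ps. Qed.

Lemma es_ps N : es (ps y N) = es y.
Proof. by rewrite /es Xs_ps. Qed.

Lemma ii_ps N : ii (ps y N) = (bs y + N %% r)%N.
Proof.
rewrite /ii es_ps porbit_ps index_uniq ?enum_uniq //.
by apply: leq_trans bs_r; rewrite ltn_add2l ltn_mod r0.
Qed.

Lemma bs_ps N : bs (ps y N) = bs y.
Proof.
by rewrite {1}/bs ii_ps /bs divnMDl ?r0 // (divn_small (ltn_pmod N r0)) addn0.
Qed.

Lemma ps_ps N : ps (ps y N) = ps y.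
Proof. by rewrite {1}/ps es_ps bs_ps. Qed.

Lemma ps_add N m : ps y (N + r * m) = (p ^+ m) (ps y N).
Proof.
rewrite /ps /psi (mulnC r) addnC divnMDl ?r0 // modnMDl.
by rewrite addnC expgD permM.
Qed.

Lemma ps_mod N : ps y N = ps y (N %% (r * Lp y)).
Proof.
rewrite {1}(divn_eq N (r * Lp y)) addnC (mulnC _ (r * _)%N) -(mulnA r) ps_add permX.
by apply/eqP; rewrite iter_fixE -/(Lp _) Lp_ps dvdn_mulr.
Qed.

Lemma pos_ps N : bpos (ps y N) = N %% (r * Lp y).
Proof.
have [H1 H2 _] := Xs_orbit (nth_in N).
rewrite /bpos porbit_ps ii_ps /bs modnMDl modn_mod Lp_ps.
rewrite arith_mod ?r0 ?porbit_gt0 //; congr (r * _ + _)%N.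
rewrite {1}/ps /psi permX -iter_mod.
have E : #|porbit p (xr (nth set0 (es y) (bs y + N %% r)))| = Lp y.
  by rewrite porbit_xr.
rewrite E; have := @index_iter _ p (xr (nth set0 (es y) (bs y + N %% r))) ((N %/ r) %% Lp y); rewrite E; apply; by rewrite ltn_mod /Lp porbit_gt0.
Qed.

Lemma ps_pos : ps y (bpos y) = y.
Proof.
have [H1 H2 _] := Xs_orbit y_in.
have ilt : ii y %% r < r by rewrite ltn_mod r0.
rewrite /ps /psi /bpos (mulnC r) divnMDl ?r0 // divn_small // addn0 modnMDl modn_small //.
rewrite /bs -divn_eq /ii nth_index ?mem_enum ?y_in // -/(ii y) permX.
set x := xr (porbit p y).
have Ex : porbit p x = porbit p y by rewrite porbit_xr.
have yin : y \in traject p x (Lp y) by rewrite /Lp -Ex -porbit_traject Ex porbit_id.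
have hi : index y (traject p x (Lp y)) < Lp y by rewrite -[X in _ < X](size_traject p x (Lp y)) index_mem.
by rewrite -(nth_traject p hi x) nth_index.
Qed.

Lemma pos_lt : bpos y < r * Lp y.
Proof. by rewrite -{1}ps_pos pos_ps ltn_mod muln_gt0 r0 porbit_gt0. Qed.

Lemma ps_eq0 K : (ps y K == ps y 0) = (K %% (r * Lp y) == 0).
Proof.
apply/eqP/eqP => [E|E].
  by have := pos_ps K; rewrite E pos_ps mod0n.
by rewrite ps_mod E.
Qed.

End Block.
Lemma ps_add1 y (Hy : r %| Lp y) N : ps y (N + r) = p (ps y N).
Proof. by have := ps_add y N 1; rewrite muln1 expg1. Qed.

Definition sL l := (r ^ (totient (l * #|[set: gT]|)).-1)%N.
Definition sigf y := if r %| Lp y then ps y (bpos y).+1 else (p ^+ sL (Lp y)) y.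

Lemma sig_ps y (Hy : r %| Lp y) N : sigf (ps y N) = ps y N.+1.
Proof.
rewrite /sigf Lp_ps // Hy ps_ps // pos_ps //.
rewrite (ps_mod Hy N.+1) (ps_mod Hy (_ %% _).+1); congr (ps y _).
by rewrite -[(N %% _).+1]addn1 -[N.+1]addn1 modnDml.
Qed.

Lemma iter_sig_ps y (Hy : r %| Lp y) m N : iter m sigf (ps y N) = ps y (N + m).
Proof. by elim: m => [|m IH]; rewrite ?addn0 // iterS IH sig_ps // addnS. Qed.

Lemma sig_r_block y : r %| Lp y -> iter r sigf y = p y.
Proof. by move=> Hy; have := iter_sig_ps Hy r (bpos y); rewrite ps_add1 // ps_pos. Qed.

Lemma Lp_perm y a : Lp ((p ^+ a) y) = Lp y.
Proof. by rewrite /Lp porbit_perm. Qed.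

Lemma Lp_permV y a : Lp ((p^-1 ^+ a) y) = Lp y.
Proof. by rewrite /Lp -(porbitV p ((p^-1 ^+ a) y)) porbit_perm porbitV. Qed.

Lemma iter_sig_nb y : ~~ (r %| Lp y) -> forall m, iter m sigf y = (p ^+ (sL (Lp y) * m)) y.
Proof.
move=> Hy; elim=> [|m IH]; first by rewrite muln0 expg0 perm1.
by rewrite iterS IH /sigf !(Lp_perm y (sL (Lp y) * m)%N) (negbTE Hy) -permM -expgD mulnS addnC.
Qed.

Lemma cardG0 : 0 < #|[set: gT]|.
Proof. by apply/card_gt0P; exists 1; rewrite inE. Qed.

Lemma sL_spec L : 0 < L -> ~~ (r %| L) ->
  (r * sL L) %% (L * #|[set: gT]|) = 1 %% (L * #|[set: gT]|).
Proof.
move=> L0 Hy; rewrite /sL -expnS prednK ?totient_gt0 ?muln_gt0 ?L0 ?cardG0 //.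
by apply: Euler_exp_totient; rewrite coprimeMr !prime_coprime // Hy nG.
Qed.

Lemma sig_r_nb y : ~~ (r %| Lp y) -> iter r sigf y = p y.
Proof.
move=> Hy; rewrite iter_sig_nb // permX -iter_mod -/(Lp y) mulnC.
have := sL_spec (porbit_gt0 p y) Hy.
rewrite -/(Lp y) => /(congr1 (fun m => m %% Lp y)).
rewrite !modn_dvdm ?dvdn_mulr // => ->.
by rewrite iter_mod.
Qed.

Lemma sig_r y : iter r sigf y = p y.
Proof. by case: (boolP (r %| Lp y)) => H; [apply: sig_r_block | apply: sig_r_nb]. Qed.

Lemma sig_inj : injective sigf.
Proof.
move=> a b E; apply: (@perm_inj _ p); rewrite -!sig_r -(prednK r0) !iterSr.
by rewrite E.
Qed.

Definition sigp := perm sig_inj.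

Lemma sig_pow : sigp ^+ r = p.
Proof. by apply/permP => y; rewrite permX (eq_iter (permE sig_inj)) sig_r. Qed.

Lemma sigV_block y : r %| Lp y -> forall m N, (sigp^-1 ^+ m) (ps y (N + m)) = ps y N.
Proof.
move=> Hy m N.
have <- : (sigp ^+ m) (ps y N) = ps y (N + m).
  by rewrite permX (eq_iter (permE sig_inj)) iter_sig_ps.
exact: permV_iter.
Qed.

Lemma sigV_nb y : ~~ (r %| Lp y) -> forall m,
  (sigp^-1 ^+ m) y = (p^-1 ^+ (sL (Lp y) * m)) y.
Proof.
move=> Hy m; set z := (p^-1 ^+ _) y.
have Lz : Lp z = Lp y by rewrite /z Lp_permV.
have <- : (sigp ^+ m) z = y.
  rewrite permX (eq_iter (permE sig_inj)) iter_sig_nb ?Lz //.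
  exact: perm_iterV.
exact: permV_iter.
Qed.

Definition ff y : gT :=
  if r %| Lp y then (if y == ps y 0 then cycle_prod F p (ps y 0) else 1)
  else \prod_(j < sL (Lp y)) F ((p^-1 ^+ j) y).
Definition fF := [ffun y => ff y].
Definition PP := [ffun y => \prod_(k < r) fF ((sigp^-1 ^+ k) y)].

Lemma pV_sig : p^-1 = sigp^-1 ^+ r.
Proof. by rewrite expVgn sig_pow. Qed.

Lemma cpP_expand x : cycle_prod PP p x = \prod_(m < Lp x * r) fF ((sigp^-1 ^+ m) x).
Proof.
rewrite /cycle_prod -(big_blocks (fun m => fF ((sigp^-1 ^+ m) x))); apply: eq_bigr => a _; rewrite ffunE.
apply: eq_bigr => k _.
by rewrite pV_sig -expgM -permM -expgD mulnC.
Qed.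

Lemma PP_nb z : ~~ (r %| Lp z) -> PP z = F z.
Proof.
move=> Hz; rewrite ffunE.
transitivity (\prod_(m < r * sL (Lp z)) F ((p^-1 ^+ m) z)).
  rewrite -(big_blocks (fun m => F ((p^-1 ^+ m) z))); apply: eq_bigr => k _; rewrite ffunE sigV_nb // /ff Lp_permV (negbTE Hz).
  by apply: eq_bigr => j _; rewrite -permM -expgD (mulnC (sL _)).
set s := sL (Lp z); set L := Lp z.
have hs : (r * s) %% (L * #|[set: gT]|) = 1 %% (L * #|[set: gT]|) by apply: sL_spec; rewrite ?porbit_gt0.
have rs0 : 0 < r * s by rewrite muln_gt0 r0 expn_gt0 r0.
have dv : (L * #|[set: gT]|) %| (r * s).-1.
  by rewrite -subn1 -eqn_mod_dvd // hs.
set q := ((r * s).-1 %/ (L * #|[set: gT]|))%N.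
have E : (r * s = (q * #|[set: gT]| * L).+1)%N.
  by rewrite -mulnA (mulnC _ L) divnK // prednK.
rewrite E; have -> := big_nat_recl' (fun m => F ((p^-1 ^+ m) z)).
rewrite /= expg0 perm1.
rewrite -(big_blocks (fun m => F ((p^-1 ^+ m.+1) z))).
set w := p^-1 z.
have Lw : #|porbit p w| = L by rewrite /w porbit_inv.
transitivity (F z * \prod_(a < q * #|[set: gT]|) cycle_prod F p w).
  congr (_ * _); apply: eq_bigr => a _; rewrite /cycle_prod Lw; apply: eq_bigr => j _.
  rewrite expgS permM -/w addnC expgD permM; congr (F _).
  rewrite permX; apply/eqP; rewrite iter_fixE porbit_perm porbitV Lw; exact: dvdn_mull.
rewrite prod_const mulnC expgM.
have -> : cycle_prod F p w ^+ #|[set: gT]| = 1.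
  exact: (expg_cardG (G := [set: gT]%G)) (in_setT _).
by rewrite expg1n mulg1.
Qed.

Lemma cpP_nb x : ~~ (r %| Lp x) -> cycle_prod PP p x = cycle_prod F p x.
Proof. by move=> Hx; rewrite /cycle_prod; apply: eq_bigr => a _; rewrite PP_nb // Lp_permV. Qed.

Lemma cpP_block x : r %| Lp x -> cycle_prod PP p x = cycle_prod F p (ps x 0).
Proof.
move=> Hx; rewrite cpP_expand.
have Ex : ps x (bpos x + r * Lp x) = x by rewrite ps_add ps_pos // permX iter_porbit.
transitivity (\prod_(m < Lp x * r)
   (if (bpos x + r * Lp x - m) %% (r * Lp x) == 0 then cycle_prod F p (ps x 0) else 1)).
  apply: eq_bigr => m _.
  have hm : m <= bpos x + r * Lp x by rewrite (leq_trans (ltnW (ltn_ord m))) // mulnC leq_addl.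
  have := sigV_block Hx m (bpos x + r * Lp x - m); rewrite subnK // Ex => ->.
  by rewrite ffunE /ff Lp_ps // Hx ps_ps // ps_eq0.
apply: (@prod_one_hot gT (cycle_prod F p (ps x 0)) (Lp x * r)%N (bpos x) (fun m => (bpos x + r * Lp x - m) %% (r * Lp x) == 0)); first by rewrite mulnC pos_lt.
move=> m hm; apply: arith2; first exact: pos_lt.
by rewrite mulnC.
Qed.

Lemma conj_hyp x : exists u, cycle_prod F p x = (cycle_prod PP p x) ^ u.
Proof.
case: (boolP (r %| Lp x)) => Hx; last by exists 1; rewrite cpP_nb // conjg1.
rewrite cpP_block //.
suff : conjc (cycle_prod F p x) (cycle_prod F p (ps x 0)).
  by case/imsetP => u _ ->; exists u.
apply: conjc_trans (conjc_sym (op_class F p x)) _.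
have [_ _ H] := Xs_orbit (nth_in Hx 0).
apply: conjc_trans (conjc_sym H) _.
by rewrite -(porbit_ps Hx 0); apply: op_class.
Qed.

Lemma bwd : is_rth_power (F, p) r.
Proof.
apply/rth_powerP; have [t Ht] := cohom conj_hyp.
exists [ffun i => t i * fF i * (t (sigp^-1 i))^-1], sigp; split; first exact: sig_pow.
move=> i; rewrite Ht ffunE.
have := tele (fun k => (t ((sigp^-1 ^+ k) i))^-1) (fun k => fF ((sigp^-1 ^+ k) i)) r.
rewrite /= expg0 perm1 !invgK -pV_sig => <-.
apply: eq_bigr => k _; rewrite !ffunE expgSr permM.
by rewrite invgK.
Qed.

End Bwd.

End Aux.
Import Aux.

Theorem corollary4p4 (gT : finGroupType) (n r : nat) (g : wr gT n) :
  prime r -> ~~ (r %| #|[set: gT]|) ->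
  (is_rth_power g r <->
   (forall C : {set gT}, C \in classes [set: gT] ->
      forall k : nat, 0 < k <= n -> r %| k -> r %| wr_type g C k)).
Proof.
move=> pr nG; case: g => F p; split.
- move/rth_powerP => [f [s [Hs HF]]] C HC k _ rk.
  exact: (X_card pr Hs HF HC rk).
- move=> Hc; case: n F p Hc => [|n'] F p Hc.
  + apply/rth_powerP; exists F, p; split; first by apply/permP => -[].
    by move=> -[].
  + exact: (bwd ord0 pr nG Hc).
Qed.
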